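(* Let $\mathfrak l$ be a real finite-dimensional nilpotent Lie algebra with $\dim\mathfrak l'=2$ and $\mathfrak l'\subset\mathfrak z(\mathfrak l)$, having a basis $X_1,\dots,X_n,Y,Z$ ($n\ge4$) with $[X_1,X_2]=Y$, $[X_1,X_3]=Z$, $[X_2,X_3]=0$, $[X_1,X_4]=0$, $[X_2,X_4]=Z$, and $[X_1,X_j]=[X_2,X_j]=0$ for $j\ge5$. Let $\mathfrak a$ be a semisimple orthogonal $\mathfrak l$-module and $[\alpha,\gamma]\in\mathcal H^2_Q(\mathfrak l,\mathfrak a)$ admissible, represented with $\alpha(\mathfrak l,\mathfrak l)\subset\mathfrak a^{\mathfrak l}$. Then $\alpha([X_3,X_j],\cdot)=0$ for all $j\ge5$.
   Context: For a Lie algebra $\mathfrak l$: $\mathfrak l^1=\mathfrak l$, $\mathfrak l^{k+1}=[\mathfrak l,\mathfrak l^k]$, $\mathfrak l'=\mathfrak l^2$, $\mathfrak z(\mathfrak l)$ the centre. An orthogonal $\mathfrak l$-module $(\rho,\mathfrak a)$ is a finite-dimensional real vector space with a nondegenerate symmetric bilinear form $\langle\cdot,\cdot\rangle_{\mathfrak a}$ and a representation by skew-adjoint maps; $\mathfrak a^{\mathfrak l}$ its invariants. $C^p(\mathfrak l,\mathfrak a)$: alternating $p$-linear maps with Chevalley–Eilenberg differential $d$; $C^p(\mathfrak l)=C^p(\mathfrak l,\mathbb R)$; $\langle\alpha\wedge\beta\rangle$ is the wedge product followed by contraction with $\langle\cdot,\cdot\rangle_{\mathfrak a}$. $\mathcal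 Z^2_Q(\mathfrak l,\mathfrak a)=\{(\alpha,\gamma)\in C^2(\mathfrak l,\mathfrak a)\oplus C^3(\mathfrak l): d\alpha=0,d\gamma=\frac12\langle\alpha\wedge\alpha\rangle\}$; the group $C^1(\mathfrak l,\mathfrak a)\oplus C^2(\mathfrak l)$ with $(\tau_1,\sigma_1)*(\tau_2,\sigma_2)=(\tau_1+\tau_2,\sigma_1+\sigma_2+\frac12\langle\tau_1\wedge\tau_2\rangle)$ acts by $(\alpha,\gamma)(\tau,\sigma)=(\alpha+d\tau,\gamma+d\sigma+\langle(\alpha+\frac12d\tau)\wedge\tau\rangle)$; $\mathcal H^2_Q(\mathfrak l,\mathfrak a)$ is the orbit set. Admissibility: with $\mathfrak l^{m+2}=0$, $\mathfrak l_{(0)}=\mathfrak z(\mathfrak l)\cap\ker\rho$, $\mathfrak l_{(k)}=\mathfrak z(\mathfrak l)\cap\mathfrak l^{k+1}$ ($k\ge1$), and a representative with $\alpha(\mathfrak l,\mathfrak l)\subset\mathfrak a^{\mathfrak l}$, the class is admissible iff for all $0\le k\le m$: $(A_k)$ whenever $L_0\in\mathfrak l_{(k)}$ and there are $A_0\in\mathfrak a$, $Z_0\in(\mathfrak l^{k+1})^*$ with $\alpha(L,L_0)=0$ and $\gamma(L,L_0,\cdot)=-\langle A_0,\alpha(L,\cdot)\rangle_{\mathfrak a}+\langle Z_0,[L,\cdot]\rangle$ on $\mathfrak l^{k+1}$ for all $L$, then $L_0=0$; $(B_k)$ $\alpha$ applied to the kernel of the bracket map $\mathfrak l\otimes\mathfrak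 l^{k+1}\to\mathfrak l$ is a nondegenerate subspace of $\mathfrak a$. *)

(* Defs.v *)
From HB Require Import structures.
From mathcomp Require Import all_boot all_order all_algebra.
From mathcomp Require Import reals.
Set Implicit Arguments. Unset Strict Implicit. Unset Printing Implicit Defensive.
Import Order.TTheory GRing.Theory Num.Theory.
Local Open Scope ring_scope.

Definition linv (R : realType) (U V : lmodType R) (f : U -> V) : Prop :=
  forall (c : R) (u v : U), f (c *: u + v) = c *: f u + f v.
Definition linR (R : realType) (U : lmodType R) (f : U -> R) : Prop :=
  forall (c : R) (u v : U), f (c *: u + v) = c * f u + f v.

Section LieDefs.
Variables (R : realType) (l : vectType R) (br : l -> l -> l).

Definition is_lie_bracket : Prop :=
  [/\ forall x, linv (br x), forall y, linv (fun x => br x y),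
      forall x, br x x = 0 &
      forall x y z, br x (br y z) + br y (br z x) + br z (br x y) = 0].

Definition brsp (U V : {vspace l}) : {vspace l} :=
  <<[seq br u v | u <- vbasis U, v <- vbasis V]>>%VS.

Fixpoint lcs_aux (k : nat) : {vspace l} :=
  if k is k'.+1 then brsp fullv (lcs_aux k') else fullv.
(* lower central series l^k (paper indexing: l^1 = l, l^(k+1) = [l, l^k]) *)
Definition lcs (k : nat) : {vspace l} := lcs_aux k.-1.

Definition central (z : l) : Prop := forall x, br x z = 0.

Variables (a : vectType R) (B : a -> a -> R) (rho : l -> a -> a).

Definition is_orth_module : Prop :=
  [/\ (forall u, linR (B u)) /\ (forall u v, B u v = B v u),
      (forall u, (forall v, B u v = 0) -> u = 0),
      (forall x, linv (rho x)) /\ (forall v, linv (fun x => rho x v)),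
      (forall x y v, rho (br x y) v = rho x (rho y v) - rho y (rho x v)) &
      (forall x u v, B (rho x u) v = - B u (rho x v))].

Definition invariant_sub (U : {vspace a}) : Prop :=
  forall x u, u \in U -> rho x u \in U.

Definition semisimple_module : Prop :=
  forall U : {vspace a}, invariant_sub U ->
    exists W : {vspace a}, [/\ invariant_sub W, (U :&: W = 0)%VS & (U + W = fullv)%VS].

Definition invariant_vec (v : a) : Prop := forall x, rho x v = 0.

Definition cochain2 (al : l -> l -> a) : Prop :=
  [/\ forall x, linv (al x), forall y, linv (fun x => al x y) & forall x, al x x = 0].
Definition cochain3 (g : l -> l -> l -> R) : Prop :=
  [/\ (forall x y, linR (g x y)) /\ (forall x z, linR (fun y => g x y z))
      /\ (forall y z, linR (fun x => g x y z)),
      forall x y, g x x y = 0, forall x y, g x y y = 0 & forall x y, g x y x = 0].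

Definition d2 (al : l -> l -> a) (x y z : l) : a :=
  rho x (al y z) - rho y (al x z) + rho z (al x y)
  - al (br x y) z + al (br x z) y - al (br y z) x.
Definition d3 (g : l -> l -> l -> R) (x y z w : l) : R :=
  - g (br x y) z w + g (br x z) y w - g (br x w) y z
  - g (br y z) x w + g (br y w) x z - g (br z w) x y.
(* <al /\ al> (shuffle convention for the wedge product) *)
Definition wedgeB (al : l -> l -> a) (x y z w : l) : R :=
  B (al x y) (al z w) - B (al x z) (al y w) + B (al x w) (al y z)
  + B (al y z) (al x w) - B (al y w) (al x z) + B (al z w) (al x y).

Definition Z2Q (al : l -> l -> a) (g : l -> l -> l -> R) : Prop :=
  [/\ cochain2 al, cochain3 g, (forall x y z, d2 al x y z = 0) &
      (forall x y z w, d3 g x y z w = 2^-1 * wedgeB al x y z w)].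

Definition lk (k : nat) (L0 : l) : Prop :=
  central L0 /\ (if k is 0 then forall v, rho L0 v = 0 else L0 \in lcs k.+1).

Definition condA (al : l -> l -> a) (g : l -> l -> l -> R) (k : nat) : Prop :=
  forall L0, lk k L0 ->
    (exists (A0 : a) (Z0 : l -> R), linR Z0 /\
       forall L, al L L0 = 0 /\
         forall L', L' \in lcs k.+1 ->
           g L L0 L' = - B A0 (al L L') + Z0 (br L L')) ->
    L0 = 0.

(* the image under al of the kernel of the bracket map l (x) l^(k+1) -> l,
   elements of the tensor product written as finite sums of pure tensors *)
Definition alpha_ker (al : l -> l -> a) (k : nat) (v : a) : Prop :=
  exists s : seq (l * l),
    [/\ all (fun p => p.2 \in lcs k.+1) s,
        \sum_(p <- s) br p.1 p.2 = 0 &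
        v = \sum_(p <- s) al p.1 p.2].

Definition condB (al : l -> l -> a) (k : nat) : Prop :=
  forall v, alpha_ker al k v -> (forall w, alpha_ker al k w -> B v w = 0) -> v = 0.

(* admissibility, tested on a representative with al(l,l) in a^l, where
   l^(m+2) = 0 *)
Definition admissible_rep (m : nat) (al : l -> l -> a) (g : l -> l -> l -> R) : Prop :=
  forall k, (k <= m)%N -> condA al g k /\ condB al k.

End LieDefs.

(* Main.v *)
Require Import Defs.
From HB Require Import structures.
From mathcomp Require Import all_boot all_order all_algebra.
From mathcomp Require Import reals.
From mathcomp Require Import ring lra.
Import Order.TTheory GRing.Theory Num.Theory.
Local Open Scope ring_scope.
Set Implicit Arguments.

Lemma linv0 (R : realType) (U V : lmodType R) (f : U -> V) : linv f -> f 0 = 0.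
Proof.
move=> H; have h := H 1 0 0; rewrite !scale1r addr0 in h.
by have := subrr (f 0); rewrite {1}h addrK.
Qed.

Lemma linvD (R : realType) (U V : lmodType R) (f : U -> V) : linv f ->
  forall u v, f (u + v) = f u + f v.
Proof. by move=> H u v; rewrite -{1}[u]scale1r H scale1r. Qed.

Lemma linvZ (R : realType) (U V : lmodType R) (f : U -> V) : linv f ->
  forall c u, f (c *: u) = c *: f u.
Proof. by move=> H c u; rewrite -[c *: u]addr0 H (linv0 H) addr0. Qed.

Lemma linvN (R : realType) (U V : lmodType R) (f : U -> V) : linv f ->
  forall u, f (- u) = - f u.
Proof. by move=> H u; rewrite -scaleN1r (linvZ H) scaleN1r. Qed.

Lemma linv_sum (R : realType) (U V : lmodType R) (f : U -> V) : linv f ->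
  forall (I : Type) (r : seq I) (P : pred I) (F : I -> U),
  f (\sum_(i <- r | P i) F i) = \sum_(i <- r | P i) f (F i).
Proof. by move=> H I r P F; apply: (big_morph f (linvD H) (linv0 H)). Qed.

Lemma linR0 (R : realType) (U : lmodType R) (f : U -> R) : linR f -> f 0 = 0.
Proof.
move=> H; have h := H 1 0 0; rewrite scale1r addr0 mul1r in h.
by have := subrr (f 0); rewrite {1}h addrK.
Qed.

Lemma linRD (R : realType) (U : lmodType R) (f : U -> R) : linR f ->
  forall u v, f (u + v) = f u + f v.
Proof. by move=> H u v; rewrite -{1}[u]scale1r H mul1r. Qed.

Lemma linRZ (R : realType) (U : lmodType R) (f : U -> R) : linR f ->
  forall c u, f (c *: u) = c * f u.
Proof. by move=> H c u; rewrite -[c *: u]addr0 H (linR0 H) addr0. Qed.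

Lemma linRN (R : realType) (U : lmodType R) (f : U -> R) : linR f ->
  forall u, f (- u) = - f u.
Proof. by move=> H u; rewrite -scaleN1r (linRZ H) mulN1r. Qed.

Lemma linR_sum (R : realType) (U : lmodType R) (f : U -> R) : linR f ->
  forall (I : Type) (r : seq I) (P : pred I) (F : I -> U),
  f (\sum_(i <- r | P i) F i) = \sum_(i <- r | P i) f (F i).
Proof. by move=> H I r P F; apply: (big_morph f (linRD H) (linR0 H)). Qed.

Unset Implicit Arguments.

Theorem lemma7 (R : realType) (l : vectType R) (br : l -> l -> l)
  (n : nat) (X : nat -> l) (Y Z : l) (m : nat)
  (a : vectType R) (B : a -> a -> R) (rho : l -> a -> a)
  (al : l -> l -> a) (g : l -> l -> l -> R) :
  is_lie_bracket br ->
  lcs br (m.+2) = 0%VS ->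
  \dim (lcs br 2) = 2%N ->
  (forall v, v \in lcs br 2 -> central br v) ->
  (4 <= n)%N ->
  basis_of fullv ([seq X i | i <- iota 1 n] ++ [:: Y; Z]) ->
  br (X 1%N) (X 2%N) = Y -> br (X 1%N) (X 3%N) = Z -> br (X 2%N) (X 3%N) = 0 ->
  br (X 1%N) (X 4%N) = 0 -> br (X 2%N) (X 4%N) = Z ->
  (forall j, (5 <= j <= n)%N -> br (X 1%N) (X j) = 0 /\ br (X 2%N) (X j) = 0) ->
  is_orth_module br B rho ->
  semisimple_module rho ->
  Z2Q br B rho al g ->
  (forall x y, invariant_vec rho (al x y)) ->
  admissible_rep br B rho m al g ->
  forall j, (5 <= j <= n)%N -> forall L, al (br (X 3%N) (X j)) L = 0.
Proof.
move=> Hlie Hm Hdim Hcent Hn Hbasis H12 H13 H23 H14 H24 Hj5 Horth Hss HZ Hinv Hadm j Hj L.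
case: Hlie => brL brR brxx jac.
case: Horth => [[Blin Bsym] Bnd rholin rhobr rhoskew].
case: HZ => [[alL alR alxx] [[gl3 [gl2 gl1]] gxxy gxyy gxyx] Hd2 Hd3].
have bD x x' y : br (x + x') y = br x y + br x' y := linvD (brR y) x x'.
have bZ c x y : br (c *: x) y = c *: br x y := linvZ (brR y) c x.
have bsum y (I : Type) (r : seq I) (P : pred I) (F : I -> l) :
  br (\sum_(i <- r | P i) F i) y = \sum_(i <- r | P i) br (F i) y :=
  linv_sum (brR y) r P F.
have aD1 x x' y : al (x + x') y = al x y + al x' y := linvD (alR y) x x'.
have aZ1 c x y : al (c *: x) y = c *: al x y := linvZ (alR y) c x.
have a01 y : al 0 y = 0 := linv0 (alR y).
have aN1 x y : al (- x) y = - al x y := linvN (alR y) x.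
have aD2 x y y' : al x (y + y') = al x y + al x y' := linvD (alL x) y y'.
have aZ2 c x y : al x (c *: y) = c *: al x y := linvZ (alL x) c y.
have a02 x : al x 0 = 0 := linv0 (alL x).
have g1D x x' y z : g (x + x') y z = g x y z + g x' y z := linRD (gl1 y z) x x'.
have g1Z c x y z : g (c *: x) y z = c * g x y z := linRZ (gl1 y z) c x.
have g10 y z : g 0 y z = 0 := linR0 (gl1 y z).
have g2D x y y' z : g x (y + y') z = g x y z + g x y' z := linRD (gl2 x z) y y'.
have g2Z c x y z : g x (c *: y) z = c * g x y z := linRZ (gl2 x z) c y.
have g3D x y z z' : g x y (z + z') = g x y z + g x y z' := linRD (gl3 x y) z z'.
have g3Z c x y z : g x y (c *: z) = c * g x y z := linRZ (gl3 x y) c z.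
have BD u v v' : B u (v + v') = B u v + B u v' := linRD (Blin u) v v'.
have BZ u c v : B u (c *: v) = c * B u v := linRZ (Blin u) c v.
have BN u v : B u (- v) = - B u v := linRN (Blin u) v.
have BB u v v' : B u (v - v') = B u v - B u v' by rewrite BD BN.
have B0r u : B u 0 = 0 := linR0 (Blin u).
have B0l u : B 0 u = 0 by rewrite Bsym B0r.
have Bsum u (I : Type) (r : seq I) (P : pred I) (F : I -> a) :
  B u (\sum_(i <- r | P i) F i) = \sum_(i <- r | P i) B u (F i) :=
  linR_sum (Blin u) r P F.
have aA x y : al x y = - al y x.
  have h := alxx (x + y).
  rewrite aD1 !aD2 !alxx add0r addr0 in h.
  by apply/eqP; rewrite -addr_eq0 h.
have brmem x y : br x y \in lcs br 2.
  rewrite /lcs /= /brsp (coord_vbasis (memvf x)) bsum.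
  apply: rpred_sum => i _; rewrite bZ; apply: rpredZ.
  rewrite (coord_vbasis (memvf y)) (linv_sum (brL _)).
  apply: rpred_sum => k _; rewrite (linvZ (brL _)); apply: rpredZ.
  apply: memv_span; apply: allpairs_f; apply: mem_nth; by rewrite size_tuple.
have Yin : Y \in lcs br 2 by rewrite -H12.
have Zin : Z \in lcs br 2 by rewrite -H13.
have lcsYZ : lcs br 2 = <<[:: Y; Z]>>%VS.
  have fr : free [:: Y; Z] := catr_free (basis_free Hbasis).
  have sub : (<<[:: Y; Z]>> <= lcs br 2)%VS.
    by apply/span_subvP => v; rewrite !inE => /orP [] /eqP ->.
  apply/esym/eqP; rewrite eqEdim sub Hdim /=.
  by move/eqP: fr => ->.
have dec u : u \in lcs br 2 -> exists a0 b0, u = a0 *: Y + b0 *: Z.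
  rewrite lcsYZ span_cons span_seq1 => /memv_addP [u1 /vlineP [a0 ->] [u2 /vlineP [b0 ->] ->]].
  by exists a0, b0.
have cen w : w \in lcs br 2 -> forall x, br x w = 0 := fun h => Hcent w h.
have cyc x y z : al (br x y) z = al (br x z) y - al (br y z) x.
  have h := Hd2 x y z; rewrite /d2 !Hinv subrr add0r sub0r in h.
  move/eqP: h; rewrite -addrA addrC subr_eq0 => /eqP <-.
  by [].
have albr x y w : w \in lcs br 2 -> al (br x y) w = 0.
  by move=> hw; rewrite cyc !(cen w hw) !a01 subrr.
have alcc u w : u \in lcs br 2 -> w \in lcs br 2 -> al u w = 0.
  move=> /dec [a0 [b0 ->]] hw.
  by rewrite aD1 !aZ1 -H12 -H13 !albr // !scaler0 addr0.
have gzero u z w : u \in lcs br 2 -> z \in lcs br 2 -> w \in lcs br 2 -> g u z w = 0.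
  move=> /dec [a1 [b1 ->]] /dec [a2 [b2 ->]] /dec [a3 [b3 ->]].
  rewrite !(g1D, g1Z, g2D, g2Z, g3D, g3Z, gxxy, gxyy, gxyx).
  by rewrite !(mulr0, addr0, add0r).
have sym x y z w : z \in lcs br 2 -> w \in lcs br 2 ->
    B (al x z) (al y w) = B (al x w) (al y z).
  move=> hz hw; have h := Hd3 x y z w.
  rewrite /d3 /wedgeB (cen z hz x) (cen w hw x) (cen z hz y) (cen w hw y) (cen w hw z) in h.
  rewrite (gzero _ _ _ (brmem x y) hz hw) !g10 (alcc z w hz hw) B0r B0l in h.
  rewrite [B (al y z) _]Bsym [B (al y w) _]Bsym in h.
  move: h; set p := B (al x z) (al y w); set q := B (al x w) (al y z) => h.
  lra.
have symx x y z w : z \in lcs br 2 -> w \in lcs br 2 ->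
    B (al x z) (al y w) = B (al y z) (al x w).
  by move=> hz hw; rewrite sym // Bsym.
have HB1 : condB br B al 1.
  case: m Hm Hadm => [|m'] Hm' Hadm'.
    by move: Hdim; rewrite Hm' dimv0.
  exact: (Hadm' 1%N isT).2.
have kill x u : u \in lcs br 2 ->
    (forall y w, w \in lcs br 2 -> B (al x u) (al y w) = 0) -> al x u = 0.
  move=> hu horth; apply: HB1.
    exists [:: (x, u)]; split.
    - by rewrite /= hu.
    - by rewrite big_seq1 /= (cen u hu).
    - by rewrite big_seq1.
  move=> w [s [Hall _ ->]]; rewrite Bsum big1_seq // => p /andP [_ hp].
  by apply: horth; move/allP: Hall => /(_ p hp).
have span v : (forall u, u \in lcs br 2 -> B v (al (X 1%N) u) = 0 /\ B v (al (X 2%N) u) = 0) ->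
    forall y w, w \in lcs br 2 -> B v (al y w) = 0.
  move=> hv.
  have hY y : B v (al y Y) = 0.
    rewrite aA -H12 cyc [al (br (X 1%N) y) _]aA [al (br (X 2%N) y) _]aA.
    rewrite !(BN, BB, BD) (hv _ (brmem _ _)).1 (hv _ (brmem _ _)).2.
    by rewrite !(oppr0, subr0, sub0r, addr0).
  have h3Z : B v (al (X 3%N) Z) = 0.
    rewrite aA -{1}H24 cyc H23 a01 sub0r opprK aA BN (hv _ (brmem _ _)).2.
    by rewrite oppr0.
  have h3 u : u \in lcs br 2 -> B v (al (X 3%N) u) = 0.
    by move=> /dec [a0 [b0 ->]]; rewrite aD2 !aZ2 BD !BZ hY h3Z !mulr0 addr0.
  have hZ y : B v (al y Z) = 0.
    rewrite aA -H13 cyc [al (br (X 1%N) y) _]aA [al (br (X 3%N) y) _]aA.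
    rewrite !(BN, BB, BD) (h3 _ (brmem _ _)) (hv _ (brmem _ _)).1.
    by rewrite !(oppr0, subr0, sub0r, addr0).
  by move=> y w /dec [a0 [b0 ->]]; rewrite aD2 !aZ2 BD !BZ hY hZ !mulr0 addr0.
have [Hj1 Hj2] := Hj5 j Hj.
set c := br (X 3%N) (X j).
set d := br (X 4%N) (X j).
have cin : c \in lcs br 2 := brmem _ _.
have din : d \in lcs br 2 := brmem _ _.
have e2c : al (X 2%N) c = 0.
  have h := cyc (X 2%N) (X 3%N) (X j).
  rewrite H23 Hj2 !a01 sub0r in h.
  by rewrite aA; symmetry; exact: h.
have e1d : al (X 1%N) d = 0.
  have h := cyc (X 1%N) (X 4%N) (X j).
  rewrite H14 Hj1 !a01 sub0r in h.
  by rewrite aA; symmetry; exact: h.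
have e1c : al (X 1%N) c = al (X 2%N) d.
  have h1 := cyc (X 1%N) (X 3%N) (X j).
  have h2 := cyc (X 2%N) (X 4%N) (X j).
  rewrite H13 Hj1 a01 sub0r in h1.
  rewrite H24 Hj2 a01 sub0r in h2.
  rewrite aA [al (X 2%N) d]aA; apply: oppr_inj; rewrite !opprK.
  by rewrite -[LHS]opprK -[RHS]opprK; congr (- _); rewrite /c /d -h1 -h2.
have v1 : al (X 1%N) c = 0.
  apply: kill => //; apply: span => u hu; split.
    by rewrite e1c (symx _ _ _ _ din hu) e1d B0l.
  by rewrite (symx _ _ _ _ cin hu) e2c B0l.
have vx : al L c = 0.
  apply: kill => //; apply: span => u hu; split.
    by rewrite (symx _ _ _ _ cin hu) v1 B0l.
  by rewrite (symx _ _ _ _ cin hu) e2c B0l.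
by rewrite aA vx oppr0.
Qed.
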